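(* In the setting of the context, if $D<a-3$ then the quadric fibration $\pi:\widetilde{X}_{(a,1,1);D}\to\mathbb{P}^1$ has generic corank $\geq1$.
   Context: Let $a,D\geq1$, masses $m_1^2,\dots,m_{a+2}^2>0$ and vectors $p,k_1,\dots,k_a\in\mathbb{C}^D$; set $r_i^2=(p+\sum_{j=1}^{i-1}k_j)^2$ and $q_{ij}^2=(\sum_{r=i}^{j-1}k_r)^2$ for $i<j$. On $\mathbb{P}^{a+1}$ with coordinates $y_1,\dots,y_a,x,z$, the graph hypersurface of type $(a,1,1)$ is $X_{(a,1,1);D}=V(\mathbf{F})$ with $\mathbf{U}=(z+x)\sum_iy_i+zx$, $\mathbf{V}=(z+x)\sum_{i<j}q_{ij}^2y_iy_j+zx\sum_jr_j^2y_j$, $\mathbf{F}=\mathbf{U}(\sum_im_i^2y_i+m_{a+1}^2x+m_{a+2}^2z)-\mathbf{V}$. $\widetilde{X}_{(a,1,1);D}$ is its strict transform in the blow-up of $\mathbb{P}^{a+1}$ along $V(x,z)$, i.e. the hypersurface in homogeneous coordinates $(y_1,\dots,y_a,x,z,w)$ (blow-down map $[y:xw:zw]$) given by $\widetilde{\mathbf{U}}(\sum_im_i^2y_i+m_{a+1}^2xw+m_{a+2}^2zw)-\widetilde{\mathbf{V}}$ with $\widetilde{\mathbf{U}}=(z+x)\sum_iy_i+zxw$, $\widetilde{\mathbf{V}}=(z+x)\sum_{i<j}q_{ij}^2y_iy_j+zxw\sum_jr_j^2y_j$. The map $\pi$ is $[x:z]$; each fibre is a quadric in $\mathbb{P}^a$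 (coordinates $y_1,\dots,y_a,w$), and the generic corank of $\pi$ is the corank of the fibre quadratic form at a general point of $\mathbb{P}^1$. *)

(* Defs.v *)
From mathcomp Require Import all_boot all_order all_algebra.
From mathcomp Require Import complex.
From mathcomp Require Import Rstruct.
Set Implicit Arguments. Unset Strict Implicit. Unset Printing Implicit Defensive.
Import Order.TTheory GRing.Theory Num.Theory.
Local Open Scope ring_scope.

Notation CC := (complex Rdefinitions.R).

Section Feynman.
Variables (a D : nat).

Definition vsq (v : 'rV[CC]_D) : CC := \sum_(l < D) v 0 l ^+ 2.

(* Indices are 0-based: k j for j : 'I_a is k_{j+1}. *)
Definition rsq (p : 'rV[CC]_D) (k : 'I_a -> 'rV[CC]_D) (i : 'I_a) : CC :=
  vsq (p + \sum_(j < a | (j < i)%N) k j).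

Definition qsq (k : 'I_a -> 'rV[CC]_D) (i j : 'I_a) : CC :=
  vsq (\sum_(r < a | (i <= r)%N && (r < j)%N) k r).

(* Fibre of pi over [x:z] : quadric in P^a with coordinates (y_1..y_a, w);
   a vector v : 'rV_(a.+1) has y_i = v 0 (widen_ord _ i) and w = v 0 ord_max.
   msq i = m_{i+1}^2 (i < a), msqx = m_{a+1}^2, msqz = m_{a+2}^2. *)
Definition fibreQ (msq : 'I_a -> CC) (msqx msqz : CC)
  (p : 'rV[CC]_D) (k : 'I_a -> 'rV[CC]_D) (x z : CC) (v : 'rV[CC]_a.+1) : CC :=
  let y := fun i : 'I_a => v 0 (widen_ord (leqnSn a) i) in
  let w := v 0 ord_max in
  let Ut := (z + x) * (\sum_(i < a) y i) + z * x * w in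
  let Lt := \sum_(i < a) msq i * y i + (msqx * x + msqz * z) * w in
  let Vt := (z + x) * (\sum_(i < a) \sum_(j < a | (i < j)%N) qsq k i j * y i * y j)
            + z * x * w * (\sum_(j < a) rsq p k j * y j) in
  Ut * Lt - Vt.

Definition fibreGram msq msqx msqz p k (x z : CC) : 'M[CC]_a.+1 :=
  \matrix_(i, j)
    ((fibreQ msq msqx msqz p k x z (delta_mx 0 i + delta_mx 0 j)
      - fibreQ msq msqx msqz p k x z (delta_mx 0 i)
      - fibreQ msq msqx msqz p k x z (delta_mx 0 j)) / 2).

Definition fibre_corank msq msqx msqz p k (x z : CC) : nat :=
  (a.+1 - \rank (fibreGram msq msqx msqz p k x z))%N.

End Feynman.

(* Main.v *)
Require Import Defs.
From mathcomp Require Import all_boot all_order all_algebra.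
From mathcomp Require Import complex Rstruct.
From mathcomp Require Import ring zify.
Import Order.TTheory GRing.Theory Num.Theory.
Set Implicit Arguments. Unset Strict Implicit.
Local Open Scope ring_scope.

Definition pol n (Q : 'rV[CC]_n -> CC) : 'M[CC]_n :=
  \matrix_(i, j) ((Q (delta_mx 0 i + delta_mx 0 j) - Q (delta_mx 0 i) - Q (delta_mx 0 j)) / 2).

Lemma two_neq0 : (2 : CC) != 0.
Proof. by rewrite pnatr_eq0. Qed.

Lemma pol_ext n (Q Q' : 'rV[CC]_n -> CC) : (forall v, Q v = Q' v) -> pol Q = pol Q'.
Proof. by move=> H; apply/matrixP => i j; rewrite !mxE !H. Qed.

Lemma pol_add n (Q1 Q2 : 'rV[CC]_n -> CC) :
  pol (fun v => Q1 v + Q2 v) = pol Q1 + pol Q2.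
Proof. apply/matrixP => i j; rewrite !mxE; by field. Qed.

Lemma pol_sum n m (Q : 'I_m -> 'rV[CC]_n -> CC) :
  pol (fun v => \sum_(l < m) Q l v) = \sum_(l < m) pol (Q l).
Proof.
apply/matrixP => i j; rewrite !mxE summxE -!sumrB mulr_suml.
by apply: eq_bigr => l _; rewrite !mxE.
Qed.

Definition addf n (l : 'rV[CC]_n -> CC) := forall u w, l (u + w) = l u + l w.

Lemma pol_prod n (l1 l2 : 'rV[CC]_n -> CC) : addf l1 -> addf l2 ->
  (\rank (pol (fun v => (l1 v * l2 v)%R)) <= 2)%N.
Proof.
move=> h1 h2.
have -> : pol (fun v => l1 v * l2 v) =
  2^-1 *: ((\col_i l1 (delta_mx 0 i)) *m (\row_j l2 (delta_mx 0 j))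
         + (\col_i l2 (delta_mx 0 i)) *m (\row_j l1 (delta_mx 0 j))).
  apply/matrixP => i j; rewrite !mxE !big_ord1 !mxE h1 h2; by field.
apply: leq_trans (mxrankS (scalemx_sub _ (submx_refl _))) _.
apply: leq_trans (mxrank_add _ _) _.
rewrite -[2%N]/(1+1)%N; apply: leq_add; apply: leq_trans (mxrankM_maxl _ _) _; exact: rank_leq_col.
Qed.

Lemma pol_sq n (c : CC) (l : 'rV[CC]_n -> CC) : addf l ->
  (\rank (pol (fun v => (c * (l v * l v))%R)) <= 1)%N.
Proof.
move=> h.
have -> : pol (fun v => c * (l v * l v)) =
  c *: ((\col_i l (delta_mx 0 i)) *m (\row_j l (delta_mx 0 j))).
  apply/matrixP => i j; rewrite !mxE !big_ord1 !mxE h; by field.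
apply: leq_trans (mxrankS (scalemx_sub _ (submx_refl _))) _; apply: leq_trans (mxrankM_maxl _ _) _; exact: rank_leq_col.
Qed.
Lemma sym_sum n (T : 'I_n -> 'I_n -> CC) : (forall i j, T i j = T j i) ->
  \sum_(i < n) \sum_(j < n) T i j = \sum_(i < n) T i i + 2 * \sum_(i < n) \sum_(j < n | (i < j)%N) T i j.
Proof.
move=> TS.
have E : forall i, \sum_(j < n) T i j =
   \sum_(j < n | (i < j)%N) T i j + T i i + \sum_(j < n | (j < i)%N) T i j.
  move=> i; rewrite (bigID (fun j : 'I_n => (i < j)%N)) /= -addrA; congr (_ + _).
  rewrite (bigD1 i) ?ltnn //=; congr (_ + _); apply: eq_bigl => j.
  by rewrite -leqNgt ltn_neqAle andbC -val_eqE.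
under eq_bigr do rewrite E.
rewrite !big_split /=.
have -> : \sum_(i < n) \sum_(j < n | (j < i)%N) T i j = \sum_(i < n) \sum_(j < n | (i < j)%N) T i j.
  under eq_bigr do rewrite big_mkcond /=.
  rewrite exchange_big /=; apply: eq_bigr => i _; rewrite [RHS]big_mkcond /=.
  by apply: eq_bigr => j _; rewrite TS.
ring.
Qed.

Definition psum a D (k : 'I_a -> 'rV[CC]_D) (i : 'I_a) : 'rV[CC]_D :=
  \sum_(r < a | (r < i)%N) k r.

Lemma qsq_eq a D (k : 'I_a -> 'rV[CC]_D) (i j : 'I_a) : (i < j)%N ->
  qsq k i j = vsq (psum k j) + vsq (psum k i)
     - 2 * \sum_(l < D) (psum k i) 0 l * (psum k j) 0 l.
Proof.
move=> ij; rewrite /qsq.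
have -> : \sum_(r < a | (i <= r)%N && (r < j)%N) k r = psum k j - psum k i.
  rewrite /psum (bigID (fun r : 'I_a => (r < i)%N) (fun r : 'I_a => (r < j)%N)) /=.
  rewrite addrC.
  have -> : \sum_(r < a | (r < j)%N && (r < i)%N) k r = \sum_(r < a | (r < i)%N) k r.
    apply: eq_bigl => r; apply/andP/idP => [[]//|ri]; split=> //.
    exact: ltn_trans ri ij.
  rewrite addrK; apply: eq_bigl => r; by rewrite -leqNgt andbC.
rewrite /vsq mulr_sumr -big_split -sumrB /=; apply: eq_bigr => l _; rewrite !mxE; ring.
Qed.

Lemma qsum a D (k : 'I_a -> 'rV[CC]_D) (y : 'I_a -> CC) :
  \sum_(i < a) \sum_(j < a | (i < j)%N) qsq k i j * y i * y j =
  (\sum_(i < a) vsq (psum k i) * y i) * (\sum_(i < a) y i)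
  - \sum_(l < D) (\sum_(i < a) (psum k i) 0 l * y i) ^+ 2.
Proof.
pose S i := vsq (psum k i).
pose d i j := \sum_(l < D) (psum k i) 0 l * (psum k j) 0 l.
pose P i j := (S i + S j) * y i * y j.
pose R i j := d i j * y i * y j.
have dd : forall i, d i i = S i.
  by move=> i; rewrite /d /S /vsq; apply: eq_bigr => l _; rewrite expr2.
have -> : \sum_(i < a) \sum_(j < a | (i < j)%N) qsq k i j * y i * y j =
   \sum_(i < a) \sum_(j < a | (i < j)%N) P i j - 2 * \sum_(i < a) \sum_(j < a | (i < j)%N) R i j.
  rewrite mulr_sumr -sumrB; apply: eq_bigr => i _.
  rewrite mulr_sumr -sumrB; apply: eq_bigr => j ij.
  rewrite qsq_eq // /P /R /S /d; ring.
have HP := sym_sum (T := P) (fun i j => ltac:(rewrite /P; ring)).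
have dS : forall i j, d i j = d j i.
  by move=> i j; apply: eq_bigr => l _; rewrite mulrC.
have HR := sym_sum (T := R) (fun i j => ltac:(rewrite /R dS; ring)).
have eP : \sum_(i < a) \sum_(j < a | (i < j)%N) P i j =
   ((\sum_i \sum_j P i j) - \sum_i P i i) / 2 by rewrite HP; field.
have eR : \sum_(i < a) \sum_(j < a | (i < j)%N) R i j =
   ((\sum_i \sum_j R i j) - \sum_i R i i) / 2 by rewrite HR; field.
have dPR : \sum_i P i i = 2 * \sum_i R i i.
  rewrite mulr_sumr; apply: eq_bigr => i _; rewrite /P /R dd; ring.
have sP : \sum_i \sum_j P i j = (\sum_(i < a) S i * y i) * (\sum_(i < a) y i)
     + (\sum_(i < a) y i) * (\sum_(i < a) S i * y i).
  rewrite !big_distrlr -big_split; apply: eq_bigr => i _ /=.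
  rewrite -big_split; apply: eq_bigr => j _ /=; rewrite /P; ring.
have sR : \sum_i \sum_j R i j = \sum_(l < D) (\sum_(i < a) (psum k i) 0 l * y i) ^+ 2.
  under [RHS]eq_bigr do rewrite expr2 big_distrlr.
  rewrite [RHS]exchange_big; apply: eq_bigr => i _ /=.
  rewrite [RHS]exchange_big; apply: eq_bigr => j _ /=.
  rewrite /R /d !mulr_suml; apply: eq_bigr => l _; ring.
rewrite eP eR dPR sP sR /S; by field.
Qed.

Lemma rank_sum_le n m (M : 'I_m -> 'M[CC]_n) :
  (forall l, \rank (M l) <= 1)%N -> (\rank (\sum_(l < m) M l)%R <= m)%N.
Proof.
elim: m M => [|m IH] M h; first by rewrite big_ord0 mxrank0.
rewrite big_ord_recr /=; apply: leq_trans (mxrank_add _ _) _.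
apply: (@leq_trans (m + 1)); last by rewrite addn1.
apply: leq_add; last exact: h.
exact: IH.
Qed.

Theorem proposition7p3 (a D : nat) (ha : (1 <= a)%N) (hD : (1 <= D)%N)
  (msq : 'I_a -> CC) (msqx msqz : CC)
  (hm : forall i, 0 < msq i) (hmx : 0 < msqx) (hmz : 0 < msqz)
  (p : 'rV[CC]_D) (k : 'I_a -> 'rV[CC]_D)
  (hDa : (D < a - 3)%N) :
  exists S : seq CC, forall t : CC, t \notin S ->
    (1 <= fibre_corank msq msqx msqz p k t (1 : CC)%R)%N.
Proof.
exists [::] => t _.
pose y (v : 'rV[CC]_a.+1) (i : 'I_a) : CC := v 0 (widen_ord (leqnSn a) i).
pose w (v : 'rV[CC]_a.+1) : CC := v 0 ord_max.
have yD : forall u v i, y (u + v) i = y u i + y v i by move=> u v i; rewrite /y mxE.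
have wD : forall u v, w (u + v) = w u + w v by move=> u v; rewrite /w mxE.
pose Sy v := \sum_(i < a) y v i.
pose Lt v := \sum_(i < a) msq i * y v i + (msqx * t + msqz * 1) * w v.
pose A v := \sum_(i < a) vsq (psum k i) * y v i.
pose B v := \sum_(j < a) rsq p k j * y v j.
pose C (l : 'I_D) v := \sum_(i < a) (psum k i) 0 l * y v i.
have claim : forall v, fibreQ msq msqx msqz p k t 1 v =
   ((1 + t) * Sy v) * (Lt v - A v) + (t * w v) * (Lt v - B v)
   + \sum_(l < D) (1 + t) * (C l v * C l v).
  move=> v; rewrite /fibreQ /= qsum.
  have -> : \sum_(l < D) (1 + t) * (C l v * C l v) =
     (1 + t) * \sum_(l < D) (\sum_(i < a) psum k i 0 l * y v i) ^+ 2.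
    by rewrite mulr_sumr; apply: eq_bigr => l _; rewrite expr2.
  rewrite /Sy /Lt /A /B /y /w; ring.
have addS : forall (c : 'I_a -> CC), addf (fun v => \sum_(i < a) c i * y v i).
  move=> c u v; rewrite -big_split; apply: eq_bigr => i _ /=; rewrite yD; ring.
have -> : fibre_corank msq msqx msqz p k t 1 =
   (a.+1 - \rank (pol (fibreQ msq msqx msqz p k t (1:CC)%R)))%N by [].
rewrite (pol_ext claim) !pol_add pol_sum subn_gt0 ltnS.
apply: leq_trans (mxrank_add _ _) _.
apply: (@leq_trans (4 + D)%N); last by move: hDa; clear; lia.
apply: leq_add; last first.
  apply: rank_sum_le => l; apply: pol_sq; exact: addS.
apply: leq_trans (mxrank_add _ _) _.
rewrite -[4%N]/(2+2)%N; apply: leq_add; apply: pol_prod.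
- move=> u v; rewrite /Sy -mulrDr -big_split; congr (_ * _); apply: eq_bigr => i _; exact: yD.
- by move=> u v; rewrite /Lt /A (addS msq) (addS (fun i => vsq (psum k i))) wD; ring.
- by move=> u v; rewrite wD; ring.
- by move=> u v; rewrite /Lt /B (addS msq) (addS (fun j => rsq p k j)) wD; ring.
Qed.
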